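(* Let two players have additive valuations $v_1,v_2$ on a finite set of goods $M$, normalized so that $v_1(M)=v_2(M)=1$. Assume each has nonzero marginal utility, i.e. $v_i(\{g\})>0$ for every good $g$ and each $i$. Then every leximin solution is both EFX and Pareto optimal.
   Context: A valuation is a function $v:2^M\to\mathbb{R}_{\ge0}$ with $v(\emptyset)=0$ that is monotone: $v(S)\le v(T)$ whenever $S\subseteq T$. It is additive if $v(S)=\sum_{g\in S}v(\{g\})$ for all $S\subseteq M$. An allocation is an ordered partition $(A_1,\dots,A_n)$ of $M$; parts may be empty. It is EFX if for all players $i,j$ and every $g\in A_j$ we have $v_i(A_i)\ge v_i(A_j\setminus\{g\})$. It is Pareto optimal (PO) if there is no allocation $B$ with $v_i(B_i)\ge v_i(A_i)$ for all $i$ and $v_j(B_j)>v_j(A_j)$ for some $j$. For an allocation $A$, consider the multiset of utilities $\{v_i(A_i)\}_i$ sorted in increasing order. The leximin comparison is defined by: $A\prec B$ if and only if the sorted utility vector of $A$ is lexicographically smaller than that of $B$. A leximin solution is an allocation $A$ with no allocation $B$ satisfying $A\prec B$. *)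

(* Defs.v *)
From HB Require Import structures.
From mathcomp Require Import all_boot all_order all_algebra.
Set Implicit Arguments. Unset Strict Implicit. Unset Printing Implicit Defensive.
Import Order.TTheory GRing.Theory Num.Theory.
Local Open Scope ring_scope.

Section Fair.
Variables (R : realFieldType) (M : finType) (n : nat).

Definition valuation (u : {set M} -> R) : Prop :=
  u set0 = 0 /\ (forall S, 0 <= u S) /\
  (forall S T : {set M}, S \subset T -> u S <= u T).

Definition additive_val (u : {set M} -> R) : Prop :=
  forall S : {set M}, u S = \sum_(g in S) u [set g].

(* An allocation (ordered partition of M into n parts, parts may be empty)
   is represented by the owner map M -> 'I_n; bundle i is its preimage. *)
Definition bundle (A : M -> 'I_n) (i : 'I_n) : {set M} := [set g | A g == i].

Definition EFX (v : 'I_n -> {set M} -> R) (A : M -> 'I_n) : Prop :=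
  forall i j : 'I_n, forall g, g \in bundle A j ->
    v i (bundle A j :\ g) <= v i (bundle A i).

Definition pareto_optimal (v : 'I_n -> {set M} -> R) (A : M -> 'I_n) : Prop :=
  ~ exists B : M -> 'I_n,
      (forall i, v i (bundle A i) <= v i (bundle B i)) /\
      (exists j, v j (bundle A j) < v j (bundle B j)).

Definition sorted_utils (v : 'I_n -> {set M} -> R) (A : M -> 'I_n) : seq R :=
  sort <=%R [seq v i (bundle A i) | i <- enum 'I_n].

Fixpoint lex_lt (s t : seq R) : bool :=
  match s, t with
  | x :: s', y :: t' => (x < y) || ((x == y) && lex_lt s' t')
  | _, _ => false
  end.

Definition leximin_lt (v : 'I_n -> {set M} -> R) (A B : M -> 'I_n) : bool :=
  lex_lt (sorted_utils v A) (sorted_utils v B).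

Definition leximin_solution (v : 'I_n -> {set M} -> R) (A : M -> 'I_n) : Prop :=
  ~ exists B : M -> 'I_n, leximin_lt v A B.

End Fair.

(* Main.v *)
Require Import Defs.
From HB Require Import structures.
From mathcomp Require Import all_boot all_order all_algebra.
From mathcomp Require Import lra.
Import Order.TTheory GRing.Theory Num.Theory.
Local Open Scope ring_scope.
Set Implicit Arguments. Unset Strict Implicit.

Lemma s2 (R : realFieldType) (x y : R) : sort <=%R [:: x; y] = [:: Num.min x y; Num.max x y].
Proof.
rewrite /sort /=. by case: (lerP x y) => h /=; rewrite ?merge0s ?merges0.
Qed.

Definition o1 : 'I_2 := Ordinal (isT : (1 < 2)%N).

Lemma su (R : realFieldType) (M : finType) (v : 'I_2 -> {set M} -> R) A :
  sorted_utils v A = [:: Num.min (v ord0 (bundle A ord0)) (v o1 (bundle A o1));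
                         Num.max (v ord0 (bundle A ord0)) (v o1 (bundle A o1))].
Proof.
rewrite /sorted_utils enum_ordSl /= enum_ordSl /= enum_ord0 /= -s2.
by congr (sort _ [:: _; v _ (bundle A _)]); apply/val_inj.
Qed.

Lemma I2c (i j : 'I_2) : i != j -> forall k, k = i \/ k = j.
Proof.
move=> hij k; case: i j k hij => [[|[|?]] ?] [[|[|?]] ?] [[|[|?]] ?] //= _;
  by [left; apply/val_inj | right; apply/val_inj].
Qed.


Section S.
Variables (R : realFieldType) (M : finType) (v : 'I_2 -> {set M} -> R).
Hypotheses (hval : forall i, valuation (v i)) (hadd : forall i, additive_val (v i))
    (hnorm : forall i, v i [set: M] = 1).

Lemma vcompl p (S : {set M}) : v p (~: S) = 1 - v p S.
Proof.
have := hnorm p; rewrite hadd (big_setID S) /= setTI setTD -!hadd => <-.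
by rewrite addrC addrK.
Qed.

Lemma bcompl (i j : 'I_2) (hij : i != j) (B : M -> 'I_2) : bundle B j = ~: bundle B i.
Proof.
apply/setP=> g; rewrite !inE.
case: (I2c hij (B g)) => ->; rewrite eqxx ?(negbTE hij) //.
by rewrite eq_sym (negbTE hij).
Qed.

Lemma vother (i j : 'I_2) (hij : i != j) p B : v p (bundle B i) = 1 - v p (bundle B j).
Proof. by rewrite (@bcompl j i _ B) ?vcompl // eq_sym. Qed.

Lemma vD1 p (S : {set M}) (g : M) : g \in S -> v p (S :\ g) = v p S - v p [set g].
Proof. by move=> hg; rewrite (hadd p S) (hadd p (S :\ g)) (big_setD1 g hg) /= addrC addrK. Qed.

Lemma mk (i j : 'I_2) (hij : i != j) (X : {set M}) : exists D : M -> 'I_2, bundle D i = X.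
Proof.
exists (fun g => if g \in X then i else j); apply/setP => g; rewrite inE.
by case: (g \in X); rewrite ?eqxx // eq_sym (negbTE hij).
Qed.

Lemma minij (i j : 'I_2) (hij : i != j) A :
  Num.min (v ord0 (bundle A ord0)) (v o1 (bundle A o1)) =
  Num.min (v i (bundle A i)) (v j (bundle A j)).
Proof.
case: (I2c hij ord0) => e0; case: (I2c hij o1) => e1; rewrite e0 e1 //.
- by move: e1; rewrite -e0 => /(congr1 val).
- by rewrite minC.
- by move: e1; rewrite -e0 => /(congr1 val).
Qed.

Lemma lexmin (i j : 'I_2) (hij : i != j) A B :
  Num.min (v i (bundle A i)) (v j (bundle A j)) < v i (bundle B i) ->
  Num.min (v i (bundle A i)) (v j (bundle A j)) < v j (bundle B j) ->
  leximin_lt v A B.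
Proof.
move=> h1 h2; rewrite /leximin_lt !su /=; apply/orP; left.
rewrite lt_min (minij hij A); apply/andP; split.
  by case: (I2c hij ord0) => ->.
by case: (I2c hij o1) => ->.
Qed.

Lemma lexpo A B : (forall k, v k (bundle A k) <= v k (bundle B k)) ->
  (exists j, v j (bundle A j) < v j (bundle B j)) -> leximin_lt v A B.
Proof.
move=> h [j hj]; rewrite /leximin_lt !su /=.
have h0 := h ord0; have h1 := h o1.
have hs : v ord0 (bundle A ord0) + v o1 (bundle A o1) <
          v ord0 (bundle B ord0) + v o1 (bundle B o1).
  have n01 : ord0 != o1 :> 'I_2 by [].
  by case: (I2c n01 j) => e; subst j; lra.
move: hs; rewrite -(addr_min_max (v ord0 _)) -(addr_min_max (v ord0 (bundle B _))).
set a0 := v ord0 _; set a1 := v o1 _; set b0 := v ord0 _; set b1 := v o1 _.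
move=> hs.
have hm : Num.min a0 a1 <= Num.min b0 b1.
  rewrite le_min !ge_min; apply/andP; split; apply/orP; [left|right]; by [].
have [hlt|hm2] := ltP (Num.min a0 a1) (Num.min b0 b1); first by apply/orP; left.
have e : Num.min a0 a1 = Num.min b0 b1 by apply/le_anti; rewrite hm hm2.
rewrite e eqxx /=; apply/orP; left; rewrite e in hs; lra.
Qed.

End S.

Theorem theorem5p5 (R : realFieldType) (M : finType)
    (v : 'I_2 -> {set M} -> R)
    (hval : forall i, valuation (v i))
    (hadd : forall i, additive_val (v i))
    (hnorm : forall i, v i [set: M] = 1)
    (hpos : forall i (g : M), 0 < v i [set g])
    (A : M -> 'I_2) :
  leximin_solution v A -> EFX v A /\ pareto_optimal v A.
Proof.
move=> hlex; split; last first.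
  move=> [B [h1 h2]]; apply: hlex; exists B; exact: lexpo.
move=> i j g hg.
have [eij | hij] := eqVneq i j.
  subst j; case: (hval i) => _ [_ hm]; apply: hm; exact: subD1set.
rewrite leNgt; apply/negP => hlt.
have hgi := hpos i g; have hgj := hpos j g.
have eAi : v i (bundle A j) = 1 - v i (bundle A i).
  by rewrite (vother hadd hnorm (i:=j) (j:=i)) // eq_sym.
move: hlt; rewrite (vD1 (S := bundle A j) hadd i hg) => hlt.
case: (lerP (v i (bundle A i)) (v j (bundle A j))) => hab.
-   case: (lerP (v j (bundle A j) - v j [set g]) (v i (bundle A i))) => hb.
  + have [D hD] := mk hij (bundle A j :\ g).
    apply: hlex; exists D; apply: (lexmin hij); rewrite (min_idPl hab).
      rewrite hD (vD1 (S := bundle A j) hadd _ hg); lra.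
    rewrite (@vother _ _ _ hadd hnorm j i ltac:(by rewrite eq_sym) _ D) hD.
    rewrite (vD1 (S := bundle A j) hadd _ hg); lra.
  + have hji : j != i by rewrite eq_sym.
    have [D hD] := mk hji (bundle A j :\ g).
    apply: hlex; exists D; apply: (lexmin hij); rewrite (min_idPl hab).
      rewrite (vother hadd hnorm hij _ D) hD (vD1 (S := bundle A j) hadd _ hg); lra.
    by rewrite hD (vD1 (S := bundle A j) hadd _ hg).
-
  have [D hD] := mk hij (bundle A j).
  apply: hlex; exists D; apply: (lexmin hij); rewrite (min_idPr (ltW hab)).
    rewrite hD; lra.
  rewrite (@vother _ _ _ hadd hnorm j i ltac:(by rewrite eq_sym) _ D) hD; lra.
Qed.
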